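(* Let $\theta=(\gamma,\mu,\sigma)\in\mathbb{R}\times\mathbb{R}\times(0,\infty)$ and $x\in\mathbb{R}$ with $1+\gamma z>0$, where $z=(x-\mu)/\sigma$, and let $u=u_\gamma(z)$. Then \[|\partial_\mu\ell_\theta(x)|\le\begin{cases}\sigma^{-1}(1+|\gamma|)\,u^{1+\gamma}&\text{if }z\le0,\\ \sigma^{-1}(1+|\gamma|)\,u^{\gamma}&\text{if }z\ge0.\end{cases}\]
   Context: $u_\gamma(z)=(1+\gamma z)^{-1/\gamma}$ for $\gamma\ne0$ and $e^{-z}$ for $\gamma=0$. $\ell_\theta(x)=\log p_\theta(x)=-\log\sigma-u+(\gamma+1)\log u$ is the GEV log-density on $\{1+\gamma z>0\}$ (the GEV density being $p_\theta(x)=\sigma^{-1}e^{-u}u^{\gamma+1}\mathbf 1(1+\gamma z>0)$); its partial derivative in $\mu$ is $\partial_\mu\ell_\theta(x)=\frac{\gamma+1-u}{\sigma(1+\gamma z)}$. *)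

(* Defs.v *)
From Stdlib Require Import Reals.
From Coquelicot Require Import Coquelicot.
Open Scope R_scope.

Definition u_gev (g z : R) : R :=
  if Req_EM_T g 0 then exp (- z) else Rpower (1 + g * z) (- / g).

Definition z_gev (mu sigma x : R) : R := (x - mu) / sigma.

Definition ell_gev (g mu sigma x : R) : R :=
  let u := u_gev g (z_gev mu sigma x) in
  - ln sigma - u + (g + 1) * ln u.

(* Main.v *)
Require Import Defs.
From Stdlib Require Import Reals Lra.
From Coquelicot Require Import Coquelicot.
Open Scope R_scope.

Lemma deriv_ell (g mu sigma x : R) :
  0 < sigma -> 0 < 1 + g * z_gev mu sigma x ->
  is_derive (fun m => ell_gev g m sigma x) mu
    ((g + 1 - u_gev g (z_gev mu sigma x)) / (sigma * (1 + g * z_gev mu sigma x))).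
Proof.
  intros Hs Hw. unfold z_gev in *.
  destruct (Req_EM_T g 0) as [H0|H0].
  - subst g. unfold ell_gev, u_gev.
    destruct (Req_EM_T 0 0) as [_|C]; [|lra].
    apply is_derive_ext with (f := fun m => - ln sigma - exp (- ((x - m) / sigma)) + (0+1) * (- ((x - m) / sigma))).
    { intro t. simpl. destruct (Req_EM_T 0 0); [|lra]. rewrite ln_exp. reflexivity. }
    auto_derive; auto. unfold Rminus, Rdiv. field. lra.
  - unfold ell_gev, u_gev.
    apply is_derive_ext with (f := fun m => - ln sigma - exp (- / g * ln (1 + g * ((x - m) / sigma))) + (g+1) * (- / g * ln (1 + g * ((x - m) / sigma)))).
    { intro t. simpl. destruct (Req_EM_T g 0); [lra|]. unfold Rpower. rewrite ln_exp. reflexivity. }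
    destruct (Req_EM_T g 0); [lra|]. unfold Rpower.
    auto_derive.
    + lra.
    + assert (E : sigma * (1 + g * ((x - mu) / sigma)) = sigma + g * (x + - mu)) by (field; lra).
      assert (P : 0 < sigma * (1 + g * ((x - mu) / sigma))) by (apply Rmult_lt_0_compat; lra).
      unfold Rminus, Rdiv. field. split; [lra|]. split; [lra|]. exact H0.
Qed.

Lemma u_facts (g z : R) : 0 < 1 + g * z ->
  0 < u_gev g z /\ Rpower (u_gev g z) g = / (1 + g * z) /\
  (z <= 0 -> 1 <= u_gev g z) /\ (0 <= z -> u_gev g z <= 1).
Proof.
  intros Hw. unfold u_gev. destruct (Req_EM_T g 0) as [H0|H0].
  - subst g. split; [apply exp_pos|]. split.
    + unfold Rpower. rewrite Rmult_0_l, exp_0. replace (1 + 0 * z) with 1 by ring. now rewrite Rinv_1.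
    + split; intros Hz.
      * rewrite <- exp_0. apply exp_le_inv in Hz || idtac.
        destruct (Req_dec z 0) as [->|Hn]; [rewrite Ropp_0; lra|].
        left. apply exp_increasing. lra.
      * rewrite <- exp_0.
        destruct (Req_dec z 0) as [->|Hn]; [rewrite Ropp_0; lra|].
        left. apply exp_increasing. lra.
  - unfold Rpower. split; [apply exp_pos|]. split.
    + rewrite ln_exp. replace (g * (- / g * ln (1 + g * z))) with (- ln (1 + g * z)) by (field; exact H0).
      rewrite exp_Ropp, exp_ln by exact Hw. reflexivity.
    + assert (K : forall a, 0 <= a -> 1 <= exp a).
      { intros a Ha. rewrite <- exp_0. destruct Ha as [Ha| <-]; [left; apply exp_increasing; lra| lra]. }
      assert (K2 : forall a, a <= 0 -> exp a <= 1).
      { intros a Ha. rewrite <- exp_0. destruct Ha as [Ha| ->]; [left; apply exp_increasing; lra| lra]. }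
      assert (L1 : 1 + g * z <= 1 -> ln (1 + g * z) <= 0).
      { intros h. rewrite <- ln_1. destruct h as [h|h]; [left; apply ln_increasing; lra| rewrite h; lra]. }
      assert (L2 : 1 <= 1 + g * z -> 0 <= ln (1 + g * z)).
      { intros h. rewrite <- ln_1. destruct h as [h|h]; [left; apply ln_increasing; lra| rewrite <- h; lra]. }
      destruct (Rlt_or_le 0 g) as [Hg|Hg].
      * assert (0 < / g) by (apply Rinv_0_lt_compat; lra).
        split; intros Hz.
        -- apply K. assert (ln (1 + g * z) <= 0) by (apply L1; nra). nra.
        -- apply K2. assert (0 <= ln (1 + g * z)) by (apply L2; nra). nra.
      * assert (Hg' : g < 0) by lra.
        assert (/ g < 0) by (apply Rinv_lt_0_compat; lra).
        split; intros Hz.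
        -- apply K. assert (0 <= ln (1 + g * z)) by (apply L2; nra). nra.
        -- apply K2. assert (ln (1 + g * z) <= 0) by (apply L1; nra). nra.
Qed.

Theorem lemmaB2 (g mu sigma x : R) :
  0 < sigma ->
  0 < 1 + g * z_gev mu sigma x ->
  let z := z_gev mu sigma x in
  let u := u_gev g z in
  let dmu := Derive (fun m => ell_gev g m sigma x) mu in
  (z <= 0 -> Rabs dmu <= / sigma * (1 + Rabs g) * Rpower u (1 + g)) /\
  (0 <= z -> Rabs dmu <= / sigma * (1 + Rabs g) * Rpower u g).
Proof.
  intros Hs Hw z u dmu.
  assert (Hd : dmu = (g + 1 - u) / (sigma * (1 + g * z))).
  { unfold dmu. apply is_derive_unique. apply deriv_ell; assumption. }
  destruct (u_facts g z Hw) as [Hu [Hpg [H1 H2]]]. fold u in Hu, Hpg, H1, H2.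
  assert (Hp1 : Rpower u (1 + g) = u * / (1 + g * z)).
  { rewrite Rpower_plus, Rpower_1 by exact Hu. rewrite Hpg. reflexivity. }
  set (w := 1 + g * z) in *.
  assert (Hw2 : 0 < w) by exact Hw.
  assert (Hiw : 0 < / w) by (apply Rinv_0_lt_compat; lra).
  assert (His : 0 < / sigma) by (apply Rinv_0_lt_compat; lra).
  assert (Hd' : Rabs dmu = Rabs (g + 1 - u) * (/ sigma * / w)).
  { rewrite Hd. unfold Rdiv. rewrite Rabs_mult, Rinv_mult, (Rabs_pos_eq (/ sigma * / w)) by nra. reflexivity. }
  rewrite Hd'. split; intros Hz.
  - rewrite Hp1. specialize (H1 Hz).
    assert (Rabs (g + 1 - u) <= (1 + Rabs g) * u).
    { unfold Rabs at 1. destruct (Rcase_abs (g + 1 - u)); destruct (Rabs_def2b g) || idtac;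
      pose proof (Rle_abs g); pose proof (Rle_abs (- g)); rewrite Rabs_Ropp in *; nra. }
    assert (0 <= / sigma * / w) by nra. nra.
  - rewrite Hpg. specialize (H2 Hz).
    assert (Rabs (g + 1 - u) <= 1 + Rabs g).
    { unfold Rabs at 1. destruct (Rcase_abs (g + 1 - u));
      pose proof (Rle_abs g); pose proof (Rle_abs (- g)); rewrite Rabs_Ropp in *; nra. }
    assert (0 <= / sigma * / w) by nra. nra.
Qed.
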